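(* Let $R=\bigoplus_{\alpha\in\Gamma}R_{\alpha}$ be an integrally closed graded integral domain. Then $R$ is a graded-Prüfer domain if and only if every nonzero finitely generated homogeneous ideal of $R$ is a $v$-ideal.
   Context: $\Gamma$ is a commutative cancellative monoid (written additively) whose quotient group $\langle\Gamma\rangle$ is torsion-free. A graded integral domain $R=\bigoplus_{\alpha\in\Gamma}R_\alpha$ is an integral domain that is the direct sum of additive subgroups $R_\alpha$ with $R_\alpha R_\beta\subseteq R_{\alpha+\beta}$, with quotient field $K$. An ideal $I$ is homogeneous if $I=\bigoplus_\alpha(I\cap R_\alpha)$. $R$ is a graded-Prüfer domain if every nonzero finitely generated homogeneous ideal of $R$ is invertible. An ideal $I$ is a $v$-ideal if $I=(R:(R:I))$, where $(R:E)=\{x\in K: xE\subseteq R\}$. *)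

(* Defs.v *)
From HB Require Import structures.
From mathcomp Require Import all_boot all_order all_algebra.
From mathcomp Require Import fraction.
Set Implicit Arguments. Unset Strict Implicit. Unset Printing Implicit Defensive.
Import Order.TTheory GRing.Theory Num.Theory.
Local Open Scope ring_scope.

(* We require it to be
   cancellative and its quotient group <Gamma> to be torsion-free; for a
   cancellative monoid, <Gamma> is torsion-free iff n*a = n*b (n>0) forces a = b
   (the element a - b of <Gamma> has n(a-b) = 0). *)
Definition cancellative_monoid (G : nmodType) : Prop :=
  forall a b c : G, a + b = a + c -> b = c.

Definition torsionfree_quotient_group (G : nmodType) : Prop :=
  forall (n : nat) (a b : G), (0 < n)%N -> a *+ n = b *+ n -> a = b.

(* Rg a x  means  x \in R_a. *)
Definition is_grading (G : nmodType) (R : idomainType) (Rg : G -> R -> Prop) : Prop :=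
  [/\
      (forall a, Rg a 0),
      (forall a x y, Rg a x -> Rg a y -> Rg a (x - y)),
      (forall a b x y, Rg a x -> Rg b y -> Rg (a + b) (x * y)),
      (forall x : R, exists (s : seq G) (f : G -> R),
          uniq s /\ (forall a, Rg a (f a)) /\ x = \sum_(a <- s) f a) &
      (forall (s : seq G) (f : G -> R), uniq s -> (forall a, Rg a (f a)) ->
          \sum_(a <- s) f a = 0 -> forall a, a \in s -> f a = 0)].

Definition is_ideal (R : idomainType) (I : R -> Prop) : Prop :=
  [/\ I 0, (forall x y, I x -> I y -> I (x + y)) & (forall r x, I x -> I (r * x))].

Definition nonzero_ideal (R : idomainType) (I : R -> Prop) : Prop :=
  exists x, I x /\ x != 0.

Definition generated_by (R : idomainType) (I : R -> Prop) (s : seq R) : Prop :=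
  forall x, I x <-> exists c : 'I_(size s) -> R, x = \sum_(i < size s) c i * s`_i.

Definition finitely_generated (R : idomainType) (I : R -> Prop) : Prop :=
  exists s : seq R, generated_by I s.

(* I = (+)_a (I \cap R_a): every homogeneous component of an element of I lies in I *)
Definition homogeneous_ideal (G : nmodType) (R : idomainType) (Rg : G -> R -> Prop)
  (I : R -> Prop) : Prop :=
  is_ideal I /\
  forall (x : R) (s : seq G) (f : G -> R), I x -> uniq s -> (forall a, Rg a (f a)) ->
    x = \sum_(a <- s) f a -> forall a, a \in s -> I (f a).

Notation "x %:F" := (@FracField.tofrac _ x) : ring_scope.

Definition inR (R : idomainType) (x : {fraction R}) : Prop := exists r : R, x = r%:F.

Definition idealK (R : idomainType) (I : R -> Prop) : {fraction R} -> Prop :=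
  fun x => exists r, I r /\ x = r%:F.

Definition colon (R : idomainType) (E : {fraction R} -> Prop) : {fraction R} -> Prop :=
  fun x => forall y, E y -> inR (x * y).

Definition Rsubmodule (R : idomainType) (J : {fraction R} -> Prop) : Prop :=
  [/\ J 0, (forall x y, J x -> J y -> J (x + y)) & (forall r x, J x -> J (r%:F * x))].

Definition prodK (R : idomainType) (E F : {fraction R} -> Prop) : {fraction R} -> Prop :=
  fun z => exists (n : nat) (e f : 'I_n -> {fraction R}),
    (forall i, E (e i)) /\ (forall i, F (f i)) /\ z = \sum_(i < n) e i * f i.

Definition invertible (R : idomainType) (I : R -> Prop) : Prop :=
  exists J : {fraction R} -> Prop, Rsubmodule J /\
    forall z, prodK (idealK I) J z <-> inR z.

Definition v_ideal (R : idomainType) (I : R -> Prop) : Prop :=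
  forall z, idealK I z <-> colon (colon (idealK I)) z.

Definition graded_Prufer (G : nmodType) (R : idomainType) (Rg : G -> R -> Prop) : Prop :=
  forall I : R -> Prop, homogeneous_ideal Rg I -> nonzero_ideal I ->
    finitely_generated I -> invertible I.

Definition integrally_closed (R : idomainType) : Prop :=
  forall (x : {fraction R}) (p : {poly R}), p \is monic ->
    root (map_poly (fun r : R => r%:F) p) x -> inR x.

(* Main.v *)
Require Import Defs.
From mathcomp Require Import all_boot all_order all_algebra.
From mathcomp Require Import fraction ring.
From Stdlib Require Import IndefiniteDescription Classical_Prop.
Set Implicit Arguments. Unset Strict Implicit. Unset Printing Implicit Defensive.
Import Order.TTheory GRing.Theory Num.Theory.
Local Open Scope ring_scope.

Section S.
Variable R : idomainType.

Lemma inR0 : inR (0 : {fraction R}). Proof. by exists 0; rewrite tofrac0. Qed.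
Lemma inR1 : inR (1 : {fraction R}). Proof. by exists 1; rewrite tofrac1. Qed.
Lemma inRD (x y : {fraction R}) : inR x -> inR y -> inR (x + y).
Proof. by move=> [a ->] [b ->]; exists (a + b); rewrite tofracD. Qed.
Lemma inRM (x y : {fraction R}) : inR x -> inR y -> inR (x * y).
Proof. by move=> [a ->] [b ->]; exists (a * b); rewrite tofracM. Qed.
Lemma inRN (x : {fraction R}) : inR x -> inR (- x).
Proof. by move=> [a ->]; exists (- a); rewrite tofracN. Qed.
Lemma inRF (a : R) : inR a%:F. Proof. by exists a. Qed.
Lemma inR_sum I (r : seq I) (P : pred I) (F : I -> {fraction R}) :
  (forall i, P i -> inR (F i)) -> inR (\sum_(i <- r | P i) F i).
Proof. by move=> H; apply: big_ind => //; [exact: inR0 | exact: inRD]. Qed.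

Lemma int2 (ic : integrally_closed R) (w : {fraction R}) (r1 r0 : R) :
  w ^+ 2 + r1%:F * w + r0%:F = 0 -> inR w.
Proof.
move=> Hw; apply: (ic w ('X^2 + (r1%:P * 'X + r0%:P))).
  rewrite monicE lead_coefDl ?lead_coefXn //.
  rewrite size_polyXn; apply: (leq_ltn_trans (size_polyD _ _)).
  rewrite gtn_max (leq_ltn_trans (size_polyC_leq1 _)) // andbT.
  by apply: (leq_ltn_trans (size_mul_leq _ _)); rewrite size_polyX; case: (size _) (size_polyC_leq1 r1) => [|[]].
rewrite /root !rmorphD /= !rmorphM /= map_polyX !map_polyC /= !hornerE -Hw expr2.
exact/eqP.
Qed.

Lemma inv_v (I : R -> Prop) : is_ideal I -> invertible I -> v_ideal I.
Proof.
move=> [I0 ID IM] [J [[J0 JD JM] HJ]] z; split.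
  move=> Hz x Hx; rewrite mulrC; exact: Hx Hz.
move=> Hz.
have [n [e [f [He [Hf E1]]]]] := (proj2 (HJ 1) inR1).
have fc : forall i, colon (idealK I) (f i).
  move=> i y Hy; apply/(HJ _); exists 1%N, (fun=> y), (fun=> f i).
  split; first by move=> _. split; first by move=> _. by rewrite big_ord1 mulrC.
have -> : z = z * \sum_(i < n) e i * f i by rewrite -E1 mulr1.
rewrite mulr_sumr.
apply: big_ind.
- by exists 0; rewrite tofrac0.
- by move=> _ _ [a [Ia ->]] [b [Ib ->]]; exists (a + b); rewrite tofracD; split=> //; apply: ID.
move=> i _; have [a [Ia ->]] := He i; have [r Er] := Hz _ (fc i).
by exists (r * a); split; [exact: IM | rewrite mulrCA Er -tofracM mulrC].
Qed.
End S.
Definition gen (R : idomainType) (s : seq R) (x : R) : Prop :=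
  exists c : 'I_(size s) -> R, x = \sum_(i < size s) c i * s`_i.

Section G.
Variables (G : nmodType) (R : idomainType) (Rg : G -> R -> Prop).
Hypothesis HR : is_grading Rg.

Lemma Rg0 a : Rg a 0. Proof. by case: HR => H _ _ _ _; apply: H. Qed.
Lemma RgB a x y : Rg a x -> Rg a y -> Rg a (x - y). Proof. by case: HR => _ H _ _ _; apply: H. Qed.
Lemma RgD a x y : Rg a x -> Rg a y -> Rg a (x + y).
Proof. move=> Hx Hy; have -> : x + y = x - (0 - y) by rewrite sub0r opprK.
apply: RgB => //; apply: RgB => //; apply: Rg0. Qed.
Lemma RgM a b x y : Rg a x -> Rg b y -> Rg (a + b) (x * y). Proof. by case: HR => _ _ H _ _; apply: H. Qed.
Lemma Rg_sum a I (r : seq I) (P : pred I) (F : I -> R) :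
  (forall i, P i -> Rg a (F i)) -> Rg a (\sum_(i <- r | P i) F i).
Proof. by move=> H; apply: big_ind => //; [exact: Rg0 | exact: RgD]. Qed.

Lemma sum_pick (S : seq G) x (g : R) : uniq S -> x \in S ->
  \sum_(a <- S) (if x == a then g else 0) = g.
Proof.
move=> U Hx; rewrite -big_mkcond big_const_seq.
have -> : count (fun a => x == a) S = 1%N.
  have := count_uniq_mem x U; rewrite Hx /= => <-; apply: eq_count => a /=; by rewrite eq_sym.
by rewrite /= addr0.
Qed.

Lemma gen_ideal (s : seq R) : is_ideal (gen s).
Proof.
split.
- by exists (fun=> 0); rewrite big1 // => i _; rewrite mul0r.
- move=> _ _ [c ->] [c' ->]; exists (fun i => c i + c' i).
  by rewrite -big_split; apply: eq_bigr => i _; rewrite mulrDl.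
- move=> r _ [c ->]; exists (fun i => r * c i).
  by rewrite mulr_sumr; apply: eq_bigr => i _; rewrite mulrA.
Qed.

Lemma gen_homog (s : seq R) (d : nat -> G) :
  (forall i, (i < size s)%N -> Rg (d i) s`_i) -> homogeneous_ideal Rg (gen s).
Proof.
move=> Hd; split; first exact: gen_ideal.
move=> x t f [c Ex] Ut Hf Ex' g gt.
have [u Hu] : exists u : 'I_(size s) -> seq G * (G -> R), forall i,
    uniq (u i).1 /\ (forall a, Rg a ((u i).2 a)) /\ c i = \sum_(a <- (u i).1) (u i).2 a.
  apply: (@fin_all_exists _ (fun=> (seq G * (G -> R))%type) (fun i (p : seq G * (G -> R)) => uniq p.1 /\ (forall a, Rg a (p.2 a)) /\ c i = \sum_(a <- p.1) p.2 a)) => i; case: HR => _ _ _ H _.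
  by have [p [q Hpq]] := H (c i); exists (p, q).
pose F a := \sum_(i < size s) (\sum_(b <- (u i).1 | b + d i == a) (u i).2 b) * s`_i.
pose S := undup (t ++ flatten [seq [seq b + d i | b <- (u i).1] | i : 'I_(size s) <- enum 'I_(size s)]).
pose D a := (if a \in t then f a else 0) - F a.
have RF a : Rg a (F a).
  apply: Rg_sum => i _; rewrite mulr_suml; apply: Rg_sum => b /eqP <-.
  apply: RgM; first by case: (Hu i) => _ [].
  exact: Hd.
have SF : \sum_(a <- S) F a = x.
  rewrite exchange_big Ex /=; apply: eq_bigr => i _.
  rewrite -mulr_suml; congr (_ * _).
  have [Ui [_ ->]] := Hu i.
  under eq_bigr do rewrite big_mkcond.
  rewrite exchange_big /=; apply: eq_big_seq => b bu.
  apply: sum_pick; first exact: undup_uniq.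
  rewrite mem_undup mem_cat; apply/orP; right.
  apply/flatten_mapP; exists i; first by rewrite mem_enum.
  by apply/mapP; exists b.
have St : \sum_(a <- S) (if a \in t then f a else 0) = x.
  rewrite -big_mkcond -big_filter Ex'; apply: perm_big; apply: uniq_perm => //.
    by apply: filter_uniq; apply: undup_uniq.
  by move=> a; rewrite mem_filter mem_undup mem_cat; case: (a \in t).
have HD : forall a, a \in S -> D a = 0.
  case: HR => _ _ _ _ H; apply: H; first exact: undup_uniq.
    move=> a; apply: RgB => //; case: (a \in t) => //; exact: Rg0.
  by rewrite /D sumrB St SF subrr.
have : D g = 0 by apply: HD; rewrite mem_undup mem_cat gt.
rewrite /D gt => /eqP; rewrite subr_eq0 => /eqP ->.
exists (fun i => \sum_(b <- (u i).1 | b + d i == g) (u i).2 b); by [].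
Qed.
End G.
Lemma t1 (F : fieldType) (A B r s y : F) : A != 0 -> B != 0 -> y = r * A / B ->
  y ^+ 2 + (-1) * y + r * s = r / B ^+ 2 * (r * A ^+ 2 + s * B ^+ 2 - A * B).
Proof. move=> nA nB ->; field. by rewrite nB. Qed.
Lemma t2 (F : fieldType) (A B r s y : F) : A != 0 -> B != 0 -> y = r * A / B ->
  s / A * B + y - 1 = (r * A ^+ 2 + s * B ^+ 2 - A * B) / (A * B).
Proof. move=> nA nB ->; field. by rewrite nA nB. Qed.

Definition vhyp (G : nmodType) (R : idomainType) (Rg : G -> R -> Prop) :=
  forall I : R -> Prop, homogeneous_ideal Rg I -> nonzero_ideal I ->
     finitely_generated I -> v_ideal I.

Lemma pair_w (G : nmodType) (R : idomainType) (Rg : G -> R -> Prop)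
  (HR : is_grading Rg) (Hic : integrally_closed R) (Hv : vhyp Rg)
  (a b : R) (al be : G) : Rg al a -> Rg be b ->
  exists p q : {fraction R}, b%:F * (p * a%:F + q * b%:F) = b%:F /\
    inR (p * a%:F) /\ inR (p * b%:F) /\ inR (q * a%:F) /\ inR (q * b%:F).
Proof.
move=> Ha Hb.
have [->|nb] := eqVneq b 0.
  exists 0, 0; rewrite tofrac0 !mul0r; do ! split; exact: inR0.
have [->|na] := eqVneq a 0.
  exists 0, (b%:F)^-1; rewrite !mul0r tofrac0 mulr0 add0r mulVf ?mulr1 ?tofrac_eq0 //.
  do ! split; (exact: inR0 || exact: inR1).
pose s := [:: a ^+ 2; b ^+ 2].
pose d (i : nat) := if i == 0%N then al + al else be + be.
have Hh : homogeneous_ideal Rg (gen s).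
  apply: (gen_homog HR (d := d)) => -[|[|i]] //= _; rewrite expr2; exact: RgM.
have Hnz : nonzero_ideal (gen s).
  exists (a ^+ 2); split; last by rewrite expf_neq0.
  exists (fun i => if i == ord0 then 1 else 0).
  by rewrite !big_ord_recl big_ord0 /= mul1r mul0r !addr0.
have Hfg : finitely_generated (gen s) by exists s.
have := (Hv _ Hh Hnz Hfg ((a * b)%:F)).2.
case.
  move=> y Hy.
  have [c1 E1] : inR (y * (a ^+ 2)%:F).
    apply: Hy; exists (a ^+ 2); split => //.
    exists (fun i => if i == ord0 then 1 else 0).
    by rewrite !big_ord_recl big_ord0 /= mul1r mul0r !addr0.
  have [c2 E2] : inR (y * (b ^+ 2)%:F).
    apply: Hy; exists (b ^+ 2); split => //.
    exists (fun i => if i == ord0 then 0 else 1).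
    by rewrite !big_ord_recl big_ord0 /= mul1r mul0r !add0r addr0.
  apply: (int2 Hic (r1 := 0) (r0 := - (c1 * c2))).
  rewrite tofrac0 mul0r addr0 tofracN !tofracM -E1 -E2 !tofracXn.
  ring.

move=> r [[c ->]] Er.
pose A := a%:F; pose B := b%:F; pose r0 := (c ord0)%:F; pose s0 := (c (lift ord0 ord0))%:F.
have nA : A != 0 by rewrite tofrac_eq0.
have nB : B != 0 by rewrite tofrac_eq0.
have Eq : r0 * A ^+ 2 + s0 * B ^+ 2 - A * B = 0.
  rewrite /A /B -!tofracXn -!tofracM Er !big_ord_recl big_ord0 addr0 !tofracD !tofracM.
  rewrite /r0 /s0 /=; ring.
pose y := r0 * A / B.
have Hy : inR y.
  apply: (int2 Hic (r1 := -1) (r0 := c ord0 * c (lift ord0 ord0))).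
  by rewrite tofracN tofrac1 tofracM (t1 s0 nA nB (erefl y)) Eq mulr0.
have Hz : s0 / A * B = 1 - y.
  apply/eqP; rewrite -subr_eq0 opprB addrA (t2 s0 nA nB (erefl y)) Eq mul0r //.
exists (r0 / B), (s0 / A); rewrite -/A -/B.
have -> : r0 / B * A = y by rewrite /y mulrAC.
rewrite Hz addrC subrK mulr1; split => //; split => //; split.
  by rewrite divfK //; exact: inRF.
split; first by rewrite divfK //; exact: inRF.
apply: inRD; [exact: inR1 | exact: inRN].
Qed.

Definition pairP (R : idomainType) (a b : R) (pq : {fraction R} * {fraction R}) :=
  b%:F * (pq.1 * a%:F + pq.2 * b%:F) = b%:F /\
  inR (pq.1 * a%:F) /\ inR (pq.1 * b%:F) /\ inR (pq.2 * a%:F) /\ inR (pq.2 * b%:F).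

Lemma witness (R : idomainType) (hom : R -> Prop)
  (Hp : forall a b, hom a -> hom b -> exists pq, pairP a b pq) (H : seq R) :
  (forall h, h \in H -> hom h) -> has (fun h => h != 0) H ->
  exists u : nat -> {fraction R}, \sum_(i < size H) u i * (H`_i)%:F = 1 /\
    forall i, (i < size H)%N -> forall h, h \in H -> inR (u i * h%:F).
Proof.
elim: H => [|a t IH] //= Hh Hnz.
have ha : hom a by apply: Hh; rewrite inE eqxx.
have ht : forall h, h \in t -> hom h by move=> h ht; apply: Hh; rewrite inE ht orbT.
case Ht: (has (fun h => h != 0) t); last first.
  have na : a != 0 by move: Hnz; rewrite Ht orbF.
  have t0 : forall h, h \in t -> h = 0.
    move=> h hin; apply/eqP; apply: contraFT Ht => nh; apply/hasP; by exists h.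
  exists (fun i => if i is 0%N then (a%:F)^-1 else 0); split.
    rewrite big_ord_recl /= mulVf ?tofrac_eq0 // big1 ?addr0 // => i _; exact: mul0r.
  move=> [|i] _ h; rewrite inE => /orP[/eqP ->|/t0 ->] /=.
  - by rewrite mulVf ?tofrac_eq0 //; exact: inR1.
  - by rewrite tofrac0 mulr0; exact: inR0.
  - by rewrite mul0r; exact: inR0.
  - by rewrite mul0r; exact: inR0.
have [u [Hu1 Hu2]] := IH ht Ht.
have [pq Hpq] : exists pq : R -> {fraction R} * {fraction R},
    forall h, hom h -> pairP a h (pq h).
  apply: (functional_choice (fun h pq => hom h -> pairP a h pq)) => h.
  case: (classic (hom h)) => hh; first by have [pq ?] := Hp a h ha hh; exists pq.
  by exists (0, 0).
pose v i := if i is k.+1 then u k * (t`_k)%:F * (pq t`_k).2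
            else \sum_(j < size t) u j * (t`_j)%:F * (pq t`_j).1.
exists v; split.
  rewrite big_ord_recl /= /v /= mulr_suml -big_split /= -Hu1.
  apply: eq_bigr => j _.
  have [E _] := Hpq _ (ht _ (mem_nth 0 (ltn_ord j))).
  rewrite -[in RHS]E; ring.
move=> [|k] Hk h; rewrite inE => /orP[/eqP ->| hin] /=.
- rewrite mulr_suml; apply: inR_sum => j _.
  have tj := mem_nth 0 (ltn_ord j).
  have [_ [P1 _]] := Hpq _ (ht _ tj).
  rewrite -mulrA; apply: inRM => //; exact: Hu2.
- rewrite mulr_suml; apply: inR_sum => j _.
  have tj := mem_nth 0 (ltn_ord j).
  have [_ [_ [P2 _]]] := Hpq _ (ht _ tj).
  have -> : u j * (t`_j)%:F * (pq t`_j).1 * h%:F = (u j * h%:F) * ((pq t`_j).1 * (t`_j)%:F) by ring.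
  apply: inRM => //; exact: Hu2.
- have tk := mem_nth 0 (Hk : (k < size t)%N).
  have [_ [_ [_ [P3 _]]]] := Hpq _ (ht _ tk).
  rewrite -mulrA; apply: inRM => //; exact: Hu2.
- have tk := mem_nth 0 (Hk : (k < size t)%N).
  have [_ [_ [_ [_ P4]]]] := Hpq _ (ht _ tk).
  have -> : u k * (t`_k)%:F * (pq t`_k).2 * h%:F = (u k * h%:F) * ((pq t`_k).2 * (t`_k)%:F) by ring.
  apply: inRM => //; exact: Hu2.
Qed.

Lemma seq_gen (R : idomainType) (s : seq R) x : x \in s ->
  exists c : 'I_(size s) -> R, x = \sum_(i < size s) c i * s`_i.
Proof.
move=> xs; have ix : (index x s < size s)%N by rewrite index_mem.
exists (fun i => if i == Ordinal ix then 1 else 0).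
rewrite (bigD1 (Ordinal ix)) //= eqxx mul1r nth_index // big1 ?addr0 // => i /negbTE ->.
exact: mul0r.
Qed.

Unset Implicit Arguments.

Theorem corollary3p4 (G : nmodType) (R : idomainType) (Rg : G -> R -> Prop)
  (HGc : cancellative_monoid G) (HGt : torsionfree_quotient_group G)
  (HR : is_grading Rg) (Hic : integrally_closed R) :
  graded_Prufer Rg <->
  (forall I : R -> Prop, homogeneous_ideal Rg I -> nonzero_ideal I ->
     finitely_generated I -> v_ideal I).
Proof.
split.
  move=> Hgp I Hh Hnz Hfg; apply: inv_v; first exact: (proj1 Hh).
  exact: Hgp.
move=> Hv I [[I0 ID IM] Hcomp] [x0 [Ix0 nx0]] [s Hs].
have [dec Hdec] : exists dec : R -> seq G * (G -> R), forall x,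
    uniq (dec x).1 /\ (forall a, Rg a ((dec x).2 a)) /\ x = \sum_(a <- (dec x).1) (dec x).2 a.
  apply: (functional_choice (fun x (p : seq G * (G -> R)) =>
    uniq p.1 /\ (forall a, Rg a (p.2 a)) /\ x = \sum_(a <- p.1) p.2 a)) => x.
  case: HR => _ _ _ H _; have [S [f Hf]] := H x; by exists (S, f).
pose H := flatten [seq [seq (dec x).2 a | a <- (dec x).1] | x <- s].
have HI : forall h, h \in H -> I h /\ exists al, Rg al h.
  move=> h /flatten_mapP [x xs /mapP [a ai ->]].
  have [U [Hg Ex]] := Hdec x.
  split; last by exists a.
  apply: (Hcomp x _ _ _ U Hg Ex) => //.
  by apply/Hs; apply: seq_gen.
have span : forall P : R -> Prop, P 0 -> (forall x y, P x -> P y -> P (x + y)) ->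
    (forall r x, P x -> P (r * x)) -> (forall h, h \in H -> P h) -> forall x, I x -> P x.
  move=> P P0 PD PM PH x /Hs [c ->].
  apply: big_ind => // i _; apply: PM.
  have sx : s`_i \in s by apply: mem_nth.
  have [_ [_ Ex]] := Hdec s`_i.
  rewrite [X in P X]Ex big_seq; apply: big_ind => // a ai; apply: PH.
  by apply/flatten_mapP; exists s`_i => //; apply/mapP; exists a.
have Hnz : has (fun h => h != 0) H.
  apply/negPn/negP => /hasPn Hz; move/negP: nx0; apply; apply/eqP.
  apply: (span (fun x => x = 0)) => //.
  - by move=> x y -> ->; rewrite addr0.
  - by move=> r x ->; rewrite mulr0.
  - by move=> h /Hz /negPn /eqP.
have Hp : forall a b, (exists al, Rg al a) -> (exists be, Rg be b) -> exists pq, pairP a b pq.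
  move=> a b [al Ha] [be Hb]; have [p [q Hpq]] := pair_w HR Hic Hv Ha Hb.
  by exists (p, q).
have [u [Hu1 Hu2]] := witness Hp (fun h hH => proj2 (HI h hH)) Hnz.
have uc : forall i, (i < size H)%N -> colon (idealK I) (u i).
  move=> i Hi _ [x [Ix ->]].
  apply: (span (fun x => inR (u i * x%:F))) => //.
  - by rewrite tofrac0 mulr0; exact: inR0.
  - by move=> y z Hy Hz; rewrite tofracD mulrDr; exact: inRD.
  - by move=> r y Hy; rewrite tofracM mulrCA; apply: inRM => //; exact: inRF.
  - by move=> h hH; exact: Hu2.
exists (colon (idealK I)); split.
  split.
  - by move=> y _; rewrite mul0r; exact: inR0.
  - by move=> x y Hx Hy z Hz; rewrite mulrDl; apply: inRD; [exact: Hx | exact: Hy].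
  - by move=> r x Hx z Hz; rewrite -mulrA; apply: inRM; [exact: inRF | exact: Hx].
move=> z; split.
  move=> [n [e [f [He [Hf ->]]]]]; apply: inR_sum => i _.
  by rewrite mulrC; apply: Hf.
move=> [r ->]; exists (size H), (fun i => (r * H`_i)%:F), (fun i => u i).
split; last split.
- move=> i; exists (r * H`_i); split => //; apply: IM.
  exact: (proj1 (HI _ (mem_nth 0 (ltn_ord i)))).
- move=> i; exact: uc.
- by rewrite -[LHS]mulr1 -Hu1 mulr_sumr; apply: eq_bigr => i _; rewrite tofracM mulrAC mulrA.
Qed.
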